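(* Let $\mathfrak{A}$ be an architecture with $|\mathsf{Procs}|=1$ and $\mathsf{DS}=\mathsf{Stacks}$, and let $\Sigma$ be a finite alphabet. For all $k>0$, there is a sentence $\Phi^k_{\mathsf{context}}\in\mathsf{CPDL}(\mathfrak{A},\Sigma)$ of size $\mathcal{O}(k|\mathsf{DS}|^2)$ such that for every CBM $\mathcal{M}$ over $\mathfrak{A}$ and $\Sigma$, $\mathcal{M}\models\Phi^k_{\mathsf{context}}$ if and only if $\mathcal{M}\in\mathsf{Context}_k$.
   Context: With one process $p$ and only stacks $d\in\mathsf{DS}$ (each with $\mathsf{Writer}(d)=\mathsf{Reader}(d)=p$), a CBM (multiply nested word) over $\mathfrak{A},\Sigma$ is $\mathcal{M}=(a_1\cdots a_n,(\rhd^d)_{d\in\mathsf{DS}})$ with events $\mathcal{E}=\{1,\dots,n\}$, labels $\lambda(i)=a_i$, process successor $i\to i+1$, and $\rhd^d\subseteq\mathcal{E}^2$ such that distinct edges (over all $d$) have four distinct endpoints, $<=(\to\cup\bigcup_d\rhd^d)^+$ is a strict partial order (so every edge goes forward), and each stack is LIFO: $e_1\rhd^d f_1$, $e_2\rhd^d f_2$, $e_1<e_2<f_1$ imply $f_2<f_1$. A context of $\mathcal{M}$ is a possibly empty interval $I=\{e,e+1,\dots,f\}\subseteq\mathcal{E}$ such that whenever $(i,j)\in\rhd^d$ and $(i',j')\in\rhd^{d'}$ with $I\cap\{i,j\}\ne\emptyset$ and $I\cap\{i',j'\}\ne\emptyset$, then $d=d'$. $\mathcal{M}$ is $k$-context-bounded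 if $\mathcal{E}=I_1\cup\dots\cup I_k$ for some contexts $I_1,\dots,I_k$; $\mathsf{Context}_k$ is the set of $k$-context-bounded CBMs. $\mathsf{CPDL}(\mathfrak{A},\Sigma)$ has atomic propositions $\mathsf{Procs}\cup\Sigma$ and atomic programs $\{\to\}\cup\mathsf{DS}$: sentences $\Phi::=\mathsf{E}\sigma\mid\Phi\vee\Phi\mid\neg\Phi$; state formulas $\sigma::=q\mid\sigma\vee\sigma\mid\neg\sigma\mid\langle\pi\rangle\sigma$; path formulas $\pi::=\gamma\mid\mathsf{test}(\sigma)\mid\pi+\pi\mid\pi\cdot\pi\mid\pi^*\mid\pi^{-1}$. Over a CBM, $q$ holds at $e$ iff $q$ is $\lambda(e)$ or the process of $e$; $\to$ denotes process successor and $d$ denotes $\rhd^d$; $\langle\pi\rangle\sigma$ holds at $e$ iff some $f$ with $(e,f)\in[\![\pi]\!]$ satisfies $\sigma$; $\mathsf{test}(\sigma)$ is the identity on $[\![\sigma]\!]$; $+,\cdot,^*,^{-1}$ are union, composition, reflexive-transitive closure and converse; $\mathsf{E}\sigma$ holds iff some event satisfies $\sigma$. Size is formula length. *)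

(* Defs.v *)
From Stdlib Require Import Relations.
From mathcomp Require Import all_boot.
Set Implicit Arguments.
Unset Strict Implicit.
Unset Printing Implicit Defensive.

(* Architecture with a single process p and data structures DS = Stacks
   (each stack written and read by p).  DS and the alphabet Sigma are finTypes. *)

Section CBM.
Variables (DS Sigma : finType).

(* A CBM (multiply nested word): events are 0,...,n-1 with n = size word
   (the paper's 1..n shifted by one); edge d i j means i |>^d j. *)
Record cbm := CBM { word : seq Sigma; edge : DS -> rel nat }.

Definition nev (M : cbm) : nat := size (word M).

Definition step (M : cbm) (e f : nat) : Prop :=
  (f = e.+1 /\ f < nev M) \/ exists d, edge M d e f.

Definition wf_cbm (M : cbm) : Prop :=
  (forall d i j, edge M d i j -> i < nev M /\ j < nev M) /\
  (forall d d' i j i' j', edge M d i j -> edge M d' i' j' ->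
      (d, i, j) <> (d', i', j') -> uniq [:: i; j; i'; j']) /\
  (* < = (-> U U_d |>^d)^+ is a strict partial order (irreflexive) *)
  (forall e, ~ clos_trans nat (step M) e e) /\
  (* LIFO *)
  (forall d e1 f1 e2 f2, edge M d e1 f1 -> edge M d e2 f2 ->
      e1 < e2 -> e2 < f1 -> f2 < f1).

Definition in_itv (lo hi x : nat) : bool := (lo <= x) && (x < hi).

Definition is_context (M : cbm) (lo hi : nat) : Prop :=
  hi <= nev M /\
  forall d d' i j i' j', edge M d i j -> edge M d' i' j' ->
    (in_itv lo hi i || in_itv lo hi j) ->
    (in_itv lo hi i' || in_itv lo hi j') -> d = d'.

Definition context_bounded (k : nat) (M : cbm) : Prop :=
  exists I : 'I_k -> nat * nat,
    (forall i, is_context M (I i).1 (I i).2) /\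
    (forall e, e < nev M -> exists i, in_itv (I i).1 (I i).2 e).

(* CPDL(A, Sigma): atomic propositions Procs U Sigma (Procs = {p}),
   atomic programs {->} U DS. *)
Inductive sform : Type :=
  | SProc : sform
  | SLab : Sigma -> sform
  | SOr : sform -> sform -> sform
  | SNot : sform -> sform
  | SDia : pform -> sform -> sform
with pform : Type :=
  | PNext : pform
  | PStack : DS -> pform
  | PTest : sform -> pform
  | PPlus : pform -> pform -> pform
  | PComp : pform -> pform -> pform
  | PStar : pform -> pform
  | PConv : pform -> pform.

Inductive sentence : Type :=
  | EE : sform -> sentence
  | EOr : sentence -> sentence -> sentence
  | ENot : sentence -> sentence.

Fixpoint ssize (s : sform) : nat :=
  match s with
  | SProc => 1
  | SLab _ => 1
  | SOr s1 s2 => (ssize s1 + ssize s2).+1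
  | SNot s1 => (ssize s1).+1
  | SDia p s1 => (psize p + ssize s1).+1
  end
with psize (p : pform) : nat :=
  match p with
  | PNext => 1
  | PStack _ => 1
  | PTest s => (ssize s).+1
  | PPlus p1 p2 => (psize p1 + psize p2).+1
  | PComp p1 p2 => (psize p1 + psize p2).+1
  | PStar p1 => (psize p1).+1
  | PConv p1 => (psize p1).+1
  end.

Fixpoint sentsize (F : sentence) : nat :=
  match F with
  | EE s => (ssize s).+1
  | EOr F1 F2 => (sentsize F1 + sentsize F2).+1
  | ENot F1 => (sentsize F1).+1
  end.

(* Semantics over a CBM; all denotations are included in the event set
   (resp. its square). *)
Fixpoint sem_s (M : cbm) (s : sform) (e : nat) {struct s} : Prop :=
  match s with
  | SProc => e < nev M
  | SLab a => onth (word M) e = Some a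
  | SOr s1 s2 => sem_s M s1 e \/ sem_s M s2 e
  | SNot s1 => e < nev M /\ ~ sem_s M s1 e
  | SDia p s1 => exists f, sem_p M p e f /\ sem_s M s1 f
  end
with sem_p (M : cbm) (p : pform) (e f : nat) {struct p} : Prop :=
  match p with
  | PNext => f = e.+1 /\ f < nev M
  | PStack d => edge M d e f
  | PTest s => e = f /\ sem_s M s e
  | PPlus p1 p2 => sem_p M p1 e f \/ sem_p M p2 e f
  | PComp p1 p2 => exists g, sem_p M p1 e g /\ sem_p M p2 g f
  | PStar p1 => (e = f /\ e < nev M) \/ clos_trans nat (sem_p M p1) e f
  | PConv p1 => sem_p M p1 f e
  end.

Fixpoint models (M : cbm) (F : sentence) : Prop :=
  match F with
  | EE s => exists e, e < nev M /\ sem_s M s e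
  | EOr F1 F2 => models M F1 \/ models M F2
  | ENot F1 => ~ models M F1
  end.

End CBM.

(* Main.v *)
Require Import Defs.
From Stdlib Require Import Relations Classical.
From mathcomp Require Import all_boot zify.
Set Implicit Arguments. Unset Strict Implicit. Unset Printing Implicit Defensive.

Section Proof.
Variables (DS Sigma : finType).

Notation sf := (sform DS Sigma).
Notation pf := (pform DS Sigma).

Definition typedF (d : DS) : sf :=
  SOr (SDia (PStack Sigma d) (SProc DS Sigma))
      (SDia (PConv (PStack Sigma d)) (SProc DS Sigma)).
Definition falseP : pf := PTest (SNot (SProc DS Sigma)).
Definition stepP (d d' : DS) : pf :=
  PComp (PTest (typedF d)) (PComp (PNext DS Sigma)
     (PComp (PStar (PNext DS Sigma)) (PTest (typedF d')))).
Definition stepQ (p : DS * DS) : pf :=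
  if p.1 == p.2 then falseP else stepP p.1 p.2.
Definition bigP : pf := foldr (fun p acc => PPlus (stepQ p) acc) falseP (enum {: DS * DS}).
Definition psi j : sf := iter j (SDia bigP) (SProc DS Sigma).
Definition Phi k := ENot (EE (psi k)).

Lemma size_foldr (s : seq (DS * DS)) :
  psize (foldr (fun p acc => PPlus (stepQ p) acc) falseP s) <= 25 * size s + 3.
Proof.
elim: s => [|p s IH] //=.
have : psize (stepQ p) <= 24 by rewrite /stepQ; case: ifP.
lia.
Qed.

Lemma size_Phi k : 0 < k -> sentsize (Phi k) <= 32 * k * (#|DS|.+1) ^ 2.
Proof.
move=> k0.
have H1 : psize bigP <= 25 * (#|DS| * #|DS|) + 3.
  by rewrite -card_prod cardE; apply: size_foldr.
have H2 : ssize (psi k) = k * (psize bigP).+1 + 1.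
  rewrite /psi; elim: (k) => [|n IH] //=; rewrite IH; lia.
rewrite /= H2.
set D := #|DS| in H1 *. set q := psize bigP in H1 H2 *.
nia.
Qed.

Variable M : cbm DS Sigma.
Hypothesis wf : wf_cbm M.

Definition typ e d := (exists f, edge M d e f) \/ (exists f, edge M d f e).

Lemma edge_share d d' i j i' j' : edge M d i j -> edge M d' i' j' ->
  (i = i' \/ i = j' \/ j = i' \/ j = j') -> d = d'.
Proof.
move=> E1 E2 H.
case: (eqVneq (d, i, j) (d', i', j')) => [[-> _ _]|ne] //.
move: wf => [_ [Hd _]].
have := Hd _ _ _ _ _ _ E1 E2 (elimN eqP ne).
by case: H => [->|[->|[->|->]]]; rewrite /= !inE !eqxx ?orbT ?andbF.
Qed.

Lemma typ_uniq e d d' : typ e d -> typ e d' -> d = d'.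
Proof.
by move=> [[f1 E1]|[f1 E1]] [[f2 E2]|[f2 E2]]; apply: (edge_share E1 E2); tauto.
Qed.

Lemma typ_lt e d : typ e d -> e < nev M.
Proof.
move: wf => [Hr _].
by move=> [[f E]|[f E]]; have := Hr _ _ _ E; tauto.
Qed.

Lemma sem_typed e d : sem_s M (typedF d) e <-> typ e d.
Proof.
rewrite /typ /=; split.
  by move=> [[f [E _]]|[f [E _]]]; [left|right]; exists f.
move: wf => [Hr _].
by move=> [[f E]|[f E]]; [left|right]; exists f; split=> //; have := Hr _ _ _ E; tauto.
Qed.

Lemma star_next h g : sem_p M (PStar (PNext DS Sigma)) h g <-> h <= g /\ g < nev M.
Proof.
rewrite /=; split.
  move=> [[-> ?]|T]; first by split.
  elim: T => [x y [-> ?]|x y z _ [? ?] _ [? ?]]; split => //; lia.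
move=> [hg gn].
case: (eqVneq h g) => [->|ne]; first by left.
right.
have : exists n, g = h + n.+1 by exists (g - h).-1; lia.
move=> [n En] {ne hg}; subst g; move: gn.
elim: n => [|n IH] gn; first by apply: t_step; split => //; lia.
apply: (t_trans _ _ _ (h + n.+1)); first by apply: IH; lia.
by apply: t_step; split => //; lia.
Qed.

Lemma sem_stepP d d' e f : sem_p M (stepP d d') e f <-> e < f /\ typ e d /\ typ f d'.
Proof.
rewrite /stepP /=; split.
  move=> [g [[<- T1] [h [[-> _] [g2 [S [<- T2]]]]]]].
  move/star_next: S => [? _].
  by rewrite -!sem_typed; split.
move=> [lt [T1 T2]].
have fn := typ_lt T2.
exists e; split; first by split=> //; apply/sem_typed.
exists e.+1; split; first by split=> //; lia.
exists f; split; first by apply/star_next.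
by split=> //; apply/sem_typed.
Qed.

Lemma sem_false e f : ~ sem_p M falseP e f.
Proof. by rewrite /=; tauto. Qed.

Lemma sem_bigP e f : sem_p M bigP e f <->
  exists d d', d <> d' /\ e < f /\ typ e d /\ typ f d'.
Proof.
rewrite /bigP.
have : forall s : seq (DS * DS),
  sem_p M (foldr (fun p acc => PPlus (stepQ p) acc) falseP s) e f <->
  exists p, p \in s /\ sem_p M (stepQ p) e f.
  elim=> [|p s IH] /=.
    by split; [move/sem_false|move=> [? []]].
  rewrite IH; split.
    by move=> [H|[q [qs H]]]; [exists p|exists q]; rewrite ?inE ?eqxx ?qs ?orbT.
  move=> [q [qs H]]; move: qs; rewrite inE => /orP [/eqP <-|qs]; first by left.
  by right; exists q.
move=> ->; split.
  move=> [[d d'] [_]]; rewrite /stepQ /=.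
  case: eqP => [_ /sem_false //|ne /sem_stepP H].
  by exists d, d'.
move=> [d [d' [ne H]]].
exists (d, d'); split; first by rewrite mem_enum.
rewrite /stepQ /=; case: eqP => // _.
by apply/sem_stepP.
Qed.


Fixpoint ch j e : Prop :=
  match j with
  | 0 => e < nev M
  | j'.+1 => exists f d d', d <> d' /\ e < f /\ typ e d /\ typ f d' /\ ch j' f
  end.

Lemma sem_psi j e : sem_s M (psi j) e <-> ch j e.
Proof.
elim: j e => [|j IH] e //=.
split.
  move=> [f [/sem_bigP [d [d' [ne [lt [T1 T2]]]]] /IH H]].
  by exists f, d, d'.
move=> [f [d [d' [ne [lt [T1 [T2 H]]]]]]].
exists f; split; last by apply/IH.
by apply/sem_bigP; exists d, d'.
Qed.

Lemma ch_typ j e : ch j.+1 e -> exists d, typ e d.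
Proof. by move=> [f [d [_ [_ [_ [T _]]]]]]; exists d. Qed.

Lemma ch_lt j e : ch j e -> e < nev M.
Proof. case: j => [//|j] /ch_typ [d]; exact: typ_lt. Qed.

Lemma typ_ctx lo hi a b d d' : is_context M lo hi -> in_itv lo hi a -> in_itv lo hi b ->
  typ a d -> typ b d' -> d = d'.
Proof.
move=> [_ H] Ia Ib [[f E1]|[f E1]] [[g E2]|[g E2]];
  apply: (H _ _ _ _ _ _ E1 E2); by rewrite ?Ia ?Ib ?orbT.
Qed.

Lemma ctx_of lo hi : hi <= nev M ->
  (forall a b d d', in_itv lo hi a -> in_itv lo hi b -> typ a d -> typ b d' -> d = d') ->
  is_context M lo hi.
Proof.
move=> hn H; split=> // d d' i j i' j' E1 E2 /orP O1 /orP O2.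
case: O1 => I1; case: O2 => I2; apply: (H _ _ _ _ I1 I2);
  rewrite /typ; by [left; exists j | right; exists i | left; exists j' | right; exists i'
   | left; eexists; exact E1 | right; eexists; exact E1
   | left; eexists; exact E2 | right; eexists; exact E2].
Qed.

Lemma chain_of j e : ch j.+1 e -> exists (x : nat -> nat) (dd : nat -> DS), x 0 = e /\
  forall i, i < j.+1 -> x i < x i.+1 /\ typ (x i) (dd i) /\ typ (x i.+1) (dd i.+1) /\ dd i <> dd i.+1.
Proof.
elim: j e => [|j IH] e.
  move=> [f [d [d' [ne [lt [T1 [T2 _]]]]]]].
  exists (fun i => if i is 0 then e else f), (fun i => if i is 0 then d else d').
  by split=> // [[|i]] //.
move=> [f [d [d' [ne [lt [T1 [T2 H]]]]]]].
have [x [dd [x0 Hx]]] := IH _ H.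
exists (fun i => if i is i'.+1 then x i' else e), (fun i => if i is i'.+1 then dd i' else d).
split=> // [[|i]] Hi /=; last by apply: Hx.
have [_ [T3 _]] := Hx 0 erefl.
rewrite x0 in T3 *.
by rewrite -(typ_uniq T2 T3).
Qed.

Lemma min_ex (P : nat -> Prop) : (exists n, P n) -> exists n, P n /\ forall m, m < n -> ~ P m.
Proof.
move=> [n Pn]; apply: NNPP => Hno.
suff : forall n m, m <= n -> ~ P m by move=> H; apply: (H n n (leqnn n) Pn).
elim=> [|n' IH] m Hm Pm; apply: Hno; exists m; split=> // m' Hm' Pm'.
  lia.
by apply: (IH m') => //; lia.
Qed.

Ltac neq := let E := fresh in intro E; subst; tauto.

Definition cand lo y := lo <= y /\ exists w d d', lo <= w /\ w < y /\ d <> d' /\ typ w d /\ typ y d'.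

Lemma claim j : forall lo, (forall x, lo <= x -> ~ ch j.+1 x) ->
  exists I : nat -> nat * nat, (forall c, c < j.+1 -> is_context M (I c).1 (I c).2) /\
     (forall e, lo <= e -> e < nev M -> exists c, c < j.+1 /\ in_itv (I c).1 (I c).2 e).
Proof.
elim: j => [|j IH] lo Hno; case: (classic (exists y, cand lo y)) => [Hc|Hnc].
- have [y [ly [w [d [d' [lw [wy [ne [T1 T2]]]]]]]]] := Hc.
  exfalso; apply: (Hno w lw); exists y, d, d'; do 4!(split=>//).
  exact: typ_lt T2.
- exists (fun _ => (lo, nev M)); split.
    move=> c _ /=; apply: ctx_of => // a b d d' /andP [la an] /andP [lb bn] Ta Tb.
    apply: NNPP => ne.
    case: (ltngtP a b) => [ab|ba|ab].
    + by apply: Hnc; exists b; split=> //; exists a, d, d'.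
    + apply: Hnc; exists a; split=> //; exists b, d', d; repeat split => //. all: try lia. all: try neq.
    + by subst; apply: ne; apply: typ_uniq Ta Tb.
  by move=> e le en; exists 0; split=> //=; rewrite /in_itv le en.
- have [hi [[lh [w [a [b [lw [wh [ne [Tw Th]]]]]]]] Hmin]] := min_ex Hc.
  have hn := typ_lt Th.
  have [I [HI1 HI2]] : exists I : nat -> nat * nat, (forall c, c < j.+1 -> is_context M (I c).1 (I c).2) /\
     (forall e, hi <= e -> e < nev M -> exists c, c < j.+1 /\ in_itv (I c).1 (I c).2 e).
    apply: IH => x hx Hx.
    have [c Tc] := ch_typ Hx.
    case: (classic (c = a)) => [ca|ca].
    + subst c.
      have xh : hi != x by apply/eqP => E; subst x; apply: ne; apply: typ_uniq Tc Th.
      apply: (Hno hi lh); exists x, b, a; repeat split => //; try lia; try neq.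
    + apply: (Hno w lw); exists x, a, c; repeat split => //; try lia; try neq.
  exists (fun c => if c is c'.+1 then I c' else (lo, hi)); split.
    case=> [|c] Hc' /=; last by apply: HI1.
    apply: ctx_of; first by lia.
    move=> u v d d' /andP [lu uh] /andP [lv vh] Tu Tv.
    apply: NNPP => ne'.
    case: (ltngtP u v) => [uv|vu|uv].
    + by apply: (Hmin v vh); split=> //; exists u, d, d'.
    + by apply: (Hmin u uh); split=> //; exists v, d', d; repeat split => //; try lia; try neq.
    + by subst; apply: ne'; apply: typ_uniq Tu Tv.
  move=> e le en; case: (ltnP e hi) => eh.
    by exists 0; split=> //=; rewrite /in_itv le eh.
  have [c [Hc1 Hc2]] := HI2 e eh en.
  by exists c.+1; split.
- exists (fun _ => (lo, nev M)); split.
    move=> c _ /=; apply: ctx_of => // a b d d' /andP [la an] /andP [lb bn] Ta Tb.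
    apply: NNPP => ne.
    case: (ltngtP a b) => [ab|ba|ab].
    + by apply: Hnc; exists b; split=> //; exists a, d, d'.
    + by apply: Hnc; exists a; split=> //; exists b, d', d; repeat split => //; try lia; try neq.
    + by subst; apply: ne; apply: typ_uniq Ta Tb.
  by move=> e le en; exists 0; split=> //=; rewrite /in_itv le en.
Qed.


Lemma cb_no_ch k : context_bounded k.+1 M -> forall e, ~ ch k.+1 e.
Proof.
move=> [I [HI Hcov]] e /chain_of [x [dd [x0 Hx]]].
have Tx : forall i, i <= k.+1 -> typ (x i) (dd i).
  case=> [|i] Hi; first by have [_ [T _]] := Hx 0 erefl.
  by have [_ [_ [T _]]] := Hx i Hi.
have mono : forall i n, i + n <= k.+1 -> x i <= x (i + n).
  move=> i; elim=> [|n IH] Hn; first by rewrite addn0.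
  rewrite addnS in Hn *; have [lt _] := Hx (i + n) Hn.
  have := IH (ltnW Hn); lia.
have [g Hg] : exists g : 'I_k.+2 -> 'I_k.+1, forall i, in_itv (I (g i)).1 (I (g i)).2 (x i).
  apply: (@fin_all_exists 'I_k.+2 (fun _ => 'I_k.+1) (fun (i : 'I_k.+2) (c : 'I_k.+1) => in_itv (I c).1 (I c).2 (x i))) => i.
  apply: Hcov.
  apply: (typ_lt (Tx i _)); by rewrite -ltnS.
have key : forall a b : 'I_k.+2, a < b -> g a = g b -> False.
  move=> a b ab gab.
  have hb := ltn_ord b.
  have ak : a < k.+1 by lia.
  have [lt [T1 [T2 ne]]] := Hx a ak.
  apply: ne; apply: (typ_ctx (HI (g a)) _ _ T1 T2); first exact: Hg a.
  have abk : a.+1 + (b - a.+1) <= k.+1 by lia.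
  have := mono a.+1 (b - a.+1) abk; rewrite subnKC //.
  have := Hg a; have := Hg b; rewrite gab /in_itv.
  move=> /andP [? ?] /andP [? ?] ?; apply/andP; split; lia.
have ninj : ~ injective g by move/leq_card; rewrite !card_ord ltnn.
apply: ninj => a b gab; apply: val_inj.
case: (ltngtP a b) => [ab|ba|//]; exfalso; [exact: key ab gab | exact: key ba (esym gab)].
Qed.

End Proof.

Theorem mainTheorem18 :
  exists C : nat,
    forall (DS Sigma : finType) (k : nat), 0 < k ->
      exists Phi : sentence DS Sigma,
        sentsize Phi <= C * k * (#|DS|.+1) ^ 2 /\
        forall M : cbm DS Sigma, wf_cbm M ->
          (models M Phi <-> context_bounded k M).
Proof.
exists 32 => DS Sigma k k0; exists (Phi DS Sigma k); split; first exact: size_Phi.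
move=> M wf; rewrite /Phi /=.
case: k k0 => // k _; split.
- move=> H.
  have [I [HI1 HI2]] : exists I : nat -> nat * nat, (forall c, c < k.+1 -> is_context M (I c).1 (I c).2) /\
     (forall e, 0 <= e -> e < nev M -> exists c, c < k.+1 /\ in_itv (I c).1 (I c).2 e).
    apply: (claim wf) => x _ Hx; apply: H; exists x; split; first exact: ch_lt Hx.
    by apply/(sem_psi wf).
  exists (fun c : 'I_k.+1 => I c); split; first by move=> c; apply: HI1.
  move=> e en; have [c [Hc Hin]] := HI2 e (leq0n e) en; by exists (Ordinal Hc).
- move=> cb [e [en /(sem_psi wf) Hch]]; exact: (cb_no_ch wf cb Hch).
Qed.
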